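(* Let $R$ be a local ring with maximal ideal $\mathfrak m\neq 0$ such that $\mathfrak m^2=0$ and $\mathfrak m=Rx=xR$ for all $x\in\mathfrak m\setminus\{0\}$, and fix $x\in\mathfrak m\setminus\{0\}$. Then for every homomorphism $f:P\to Q$ of free left $R$-modules (respectively finitely generated free left $R$-modules) there exist free (respectively finitely generated free) left $R$-modules $M,N,V,W$ and isomorphisms $P\cong M\oplus N\oplus V$, $Q\cong M\oplus N\oplus W$ under which $f$ corresponds to the map $M\oplus N\oplus V\to M\oplus N\oplus W$ given by the matrix $\begin{pmatrix}1&0&0\\0&\cdot x&0\\0&0&0\end{pmatrix}$, where $\cdot x:N\to N$ denotes right multiplication by $x$ coordinatewise with respect to a basis of $N$.
   Context: Local ring: unique maximal left ideal $\mathfrak m$ (two-sided). *)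

(* Defs.v *)
From HB Require Import structures.
From mathcomp Require Import all_boot all_algebra.
Set Implicit Arguments. Unset Strict Implicit. Unset Printing Implicit Defensive.
Import GRing.Theory.
Local Open Scope ring_scope.

Definition left_ideal (R : nzRingType) (I : R -> Prop) : Prop :=
  [/\ I 0, (forall a b, I a -> I b -> I (a + b)) & (forall r a, I a -> I (r * a))].

Definition maximal_left_ideal (R : nzRingType) (I : R -> Prop) : Prop :=
  [/\ left_ideal I, ~ I 1 &
      forall J : R -> Prop, left_ideal J -> ~ J 1 -> (forall a, I a -> J a) ->
        forall a, J a -> I a].

Definition local_with_max (R : nzRingType) (m : R -> Prop) : Prop :=
  maximal_left_ideal m /\
  forall J : R -> Prop, maximal_left_ideal J -> forall a, J a <-> m a.

Definition is_basis (R : nzRingType) (M : lmodType R) (I : eqType) (b : I -> M)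
  : Prop :=
  (forall v : M, exists (s : seq I) (c : I -> R), v = \sum_(i <- s) c i *: b i) /\
  (forall (s : seq I) (c : I -> R), uniq s ->
     \sum_(i <- s) c i *: b i = 0 -> forall i, i \in s -> c i = 0).

Definition free_lmod (R : nzRingType) (M : lmodType R) : Prop :=
  exists (I : eqType) (b : I -> M), is_basis b.

Definition fingen_lmod (R : nzRingType) (M : lmodType R) : Prop :=
  exists s : seq M, forall v : M,
    exists c : 'I_(size s) -> R, v = \sum_(i < size s) c i *: s`_i.

Definition fgfree_lmod (R : nzRingType) (M : lmodType R) : Prop :=
  free_lmod M /\ fingen_lmod M.

Definition rmul_coord (R : nzRingType) (N : lmodType R) (I : eqType) (b : I -> N)
  (x : R) (g : N -> N) : Prop :=
  forall (s : seq I) (c : I -> R),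
    g (\sum_(i <- s) c i *: b i) = \sum_(i <- s) (c i * x) *: b i.

Definition normal_form (R : nzRingType) (Fr : lmodType R -> Prop) (x : R)
  (P Q : lmodType R) (f : P -> Q) : Prop :=
  exists (M N V W : lmodType R),
    [/\ Fr M, Fr N, Fr V & Fr W] /\
    exists (phi : P -> (M * N * V)%type) (psi : Q -> (M * N * W)%type),
      [/\ linear phi, bijective phi, linear psi & bijective psi] /\
      exists (I : eqType) (b : I -> N) (g : N -> N),
        [/\ is_basis b, rmul_coord b x g &
            forall p : P, psi (f p) = ((phi p).1.1, g (phi p).1.2, 0)].

(* Main.v *)
Require Import Defs.
From HB Require Import structures.
From mathcomp Require Import all_boot all_algebra.
From Stdlib Require Import ClassicalEpsilon FunctionalExtensionality PropExtensionality.
Set Implicit Arguments. Unset Strict Implicit. Unset Printing Implicit Defensive.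
Import GRing.Theory.
Local Open Scope ring_scope.
Definition pb (T : Type) (A : T -> Prop) : pred T :=
  fun t => if excluded_middle_informative (A t) then true else false.
Lemma pbP (T : Type) (A : T -> Prop) t : reflect (A t) (pb A t).
Proof. rewrite /pb; case: excluded_middle_informative => h; constructor => //. Qed.

Lemma agg (I : Type) (T : eqType) (Z : zmodType) (s : seq I) (k : I -> T)
   (u : seq T) (G : I -> Z) : uniq u -> all (fun i => k i \in u) s ->
  \sum_(i <- s) G i = \sum_(t <- u) \sum_(i <- s | k i == t) G i.
Proof.
move=> uu hs.
transitivity (\sum_(i <- s) \sum_(t <- u | k i == t) G i).
  elim: s hs => [|i s IH] /=; first by rewrite !big_nil.
  case/andP=> hi hs; rewrite !big_cons IH //; congr (_ + _).
  rewrite -big_filter (@eq_filter _ _ (pred1 (k i))); last by move=> t; rewrite /= eq_sym.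
  by rewrite filter_pred1_uniq // big_seq1.
by rewrite (exchange_big_dep xpredT).
Qed.
Lemma pbT (T : Type) (A : T -> Prop) t : A t -> pb A t = true.
Proof. by move=> h; apply/pbP. Qed.
Lemma pbF (T : Type) (A : T -> Prop) t : ~ A t -> pb A t = false.
Proof. by move=> h; apply/pbP. Qed.
Section Zorn.
Variable (X : eqType) (Phi : seq X -> Prop) (S0 : X -> Prop).
Definition GoodS (S : X -> Prop) := forall s : seq X, (forall e, e \in s -> S e) -> Phi s.
Definition addS (S : X -> Prop) y := fun e => S e \/ e = y.
Definition subS (S T : X -> Prop) := forall e, S e -> T e.

Definition gS (S : X -> Prop) : X -> Prop :=
  match excluded_middle_informative (exists y, GoodS (addS S y) /\ ~ S y) with
  | left h => addS S (proj1_sig (constructive_indefinite_description _ h))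
  | right _ => S end.

Lemma gS_ext S : subS S (gS S).
Proof. by rewrite /gS; destruct (excluded_middle_informative _) as [h|h] => // e he; left. Qed.

Lemma set_ext (S T : X -> Prop) : subS S T -> subS T S -> S = T.
Proof.
move=> h1 h2; apply: functional_extensionality => e.
by apply: propositional_extensionality; split; [apply: h1 | apply: h2].
Qed.

Lemma gS_one S C : subS S C -> subS C (gS S) -> C = S \/ C = gS S.
Proof.
rewrite /gS; destruct (excluded_middle_informative _) as [h|h]; last first.
  by move=> h1 h2; left; apply: set_ext.
case: (constructive_indefinite_description _ h) => y [_ ny] /= h1 h2.
case: (classic (C y)) => cy.
  right; apply: set_ext => // e [he|->] //; exact: h1.
left; apply: set_ext => // e ce; case: (h2 e ce) => // ey; by subst.
Qed.

Lemma gS_good S : GoodS S -> GoodS (gS S).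
Proof.
rewrite /gS; destruct (excluded_middle_informative _) as [h|h] => // _.
by case: (constructive_indefinite_description _ h) => y [].
Qed.

Inductive tower : (X -> Prop) -> Prop :=
| tw0 : tower S0
| twg S : tower S -> tower (gS S)
| twu (F : (X -> Prop) -> Prop) : (exists S, F S) -> (forall S, F S -> tower S) ->
    tower (fun e => exists S, F S /\ S e).

Lemma tw_S0 A : tower A -> subS S0 A.
Proof.
elim=> [|S _ IH|F [S FS] _ IH] e he //.
- by apply: gS_ext; apply: IH.
- by exists S; split => //; apply: IH.
Qed.

Definition comp C := forall A, tower A -> subS A C \/ subS C A.

Lemma L1 C A : comp C -> tower A -> subS A C -> A <> C -> subS (gS A) C.
Proof.
move=> cC tA sAC nAC; case: (cC (gS A) (twg tA)) => // sCg.
case: (gS_one sAC sCg) => eC; first by case: nAC.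
by rewrite -eC => e.
Qed.

Lemma L2 C : tower C -> comp C -> forall A, tower A -> subS A C \/ subS (gS C) A.
Proof.
move=> tC cC A; elim=> [|A' tA' IH|F FS tF IH].
- by left; apply: tw_S0.
- case: IH => [sAC|sgA].
    case: (classic (A' = C)) => [->|nAC]; first by right.
    by left; apply: L1.
  by right=> e he; apply: gS_ext; apply: sgA.
- case: (classic (exists S, F S /\ subS (gS C) S)) => [[S [FS' sS]]|nS].
    by right=> e he; exists S; split => //; apply: sS.
  left=> e [S [FS' Se]]; case: (IH S FS') => // h; first by apply: h.
  by case: nS; exists S.
Qed.

Lemma L3 C : tower C -> comp C.
Proof.
elim=> [|D tD IH|F FS tF IH].
- by move=> A tA; right; apply: tw_S0.
- move=> A tA; case: (L2 tD IH tA) => h; last by right.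
  by left=> e he; apply: gS_ext; apply: h.
- move=> A tA.
  case: (classic (exists S, F S /\ subS A S)) => [[S [FS' sS]]|nS].
    by left=> e he; exists S; split => //; apply: sS.
  right=> e [S [FS' Se]]; case: (IH S FS' A tA) => h; last by apply: h.
  by case: nS; exists S.
Qed.

Lemma tw_good : GoodS S0 -> forall A, tower A -> GoodS A.
Proof.
move=> g0 A; elim=> [//|S _ IH|F [S1 FS1] tF IH]; first exact: gS_good.
move=> s hs.
have [T [FT sT]] : exists T, F T /\ forall e, e \in s -> T e.
  elim: s hs => [|e s IHs] hs; first by exists S1.
  have [T [FT sT]] := IHs (fun e' he' => hs e' (@mem_behead _ (e :: s) _ he')).
  have [T' [FT' T'e]] := hs e (mem_head _ _).
  case: (L3 (tF _ FT) (tF _ FT')) => h.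
    exists T; split => // e'; rewrite in_cons => /orP [/eqP ->|]; [exact: h|exact: sT].
  exists T'; split => // e'; rewrite in_cons => /orP [/eqP ->//|he']; exact: h (sT _ he').
exact: (IH T FT s sT).
Qed.

Theorem zorn : GoodS S0 -> exists S, [/\ subS S0 S, GoodS S &
   forall y, GoodS (addS S y) -> S y].
Proof.
move=> g0; pose U := fun e => exists S, tower S /\ S e.
have tU : tower U by apply: twu => //; exists S0; apply: tw0.
exists U; split; [exact: tw_S0 | exact: tw_good |].
move=> y gy; apply: NNPP => nUy.
have sgU : subS (gS U) U by move=> e he; exists (gS U); split => //; apply: twg.
move: sgU; rewrite /gS; destruct (excluded_middle_informative _) as [h|h]; last first.
  by case: h; exists y.
case: (constructive_indefinite_description _ h) => z [_ nz] /= sg.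
by apply: nz; apply: sg; right.
Qed.
End Zorn.

Section Lin.
Variables (R : nzRingType) (P : lmodType R).

Definition lcp (s : seq (P * R)) : P := \sum_(p <- s) p.2 *: p.1.
Definition inL (S : P -> Prop) (s : seq (P * R)) := forall p, p \in s -> S p.1.
Definition spanP (S : P -> Prop) (v : P) := exists s, inL S s /\ v = lcp s.

Lemma lcp_cat s t : lcp (s ++ t) = lcp s + lcp t. Proof. by rewrite /lcp big_cat. Qed.
Lemma lcp_scale a s : lcp [seq (p.1, a * p.2) | p <- s] = a *: lcp s.
Proof. by rewrite /lcp big_map scaler_sumr; apply: eq_bigr => p _; rewrite scalerA. Qed.
Lemma inL_cat S s t : inL S s -> inL S t -> inL S (s ++ t).
Proof. by move=> hs ht p; rewrite mem_cat => /orP []; [apply: hs|apply: ht]. Qed.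
Lemma inL_scale S a s : inL S s -> inL S [seq (p.1, a * p.2) | p <- s].
Proof. by move=> hs p /mapP [q hq ->]; exact: hs q hq. Qed.

Definition Indep (S : P -> Prop) := forall (s : seq P) (c : P -> R), uniq s ->
  (forall e, e \in s -> S e) -> \sum_(e <- s) c e *: e = 0 -> forall e, e \in s -> c e = 0.
Definition Spans (S : P -> Prop) := forall v, spanP S v.

Definition coefs (s : seq (P * R)) (e : P) : R := \sum_(p <- s | p.1 == e) p.2.

Lemma lcp_agg (s : seq (P * R)) (u : seq P) : uniq u -> all (fun p => p.1 \in u) s ->
  lcp s = \sum_(e <- u) coefs s e *: e.
Proof.
move=> uu hs; rewrite /lcp (agg _ uu hs); apply: eq_bigr => e _.
by rewrite /coefs scaler_suml; apply: eq_bigr => p /eqP ->.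
Qed.

Definition addf (Z : zmodType) (phi : P -> R -> Z) :=
  forall e a b, phi e (a + b) = phi e a + phi e b.

Lemma addf_sum (Z : zmodType) (phi : P -> R -> Z) e (I : Type) (r : seq I) (Q : pred I) F :
  addf phi -> phi e (\sum_(i <- r | Q i) F i) = \sum_(i <- r | Q i) phi e (F i).
Proof.
move=> ha; apply: (big_morph (phi e)) => [a b|]; first exact: ha.
by apply: (@addrI _ (phi e 0)); rewrite -ha !addr0.
Qed.

Lemma ext_agg (Z : zmodType) (phi : P -> R -> Z) (s : seq (P * R)) (u : seq P) :
  addf phi -> uniq u -> all (fun p => p.1 \in u) s ->
  \sum_(p <- s) phi p.1 p.2 = \sum_(e <- u) phi e (coefs s e).
Proof.
move=> ha uu hs; rewrite (agg _ uu hs); apply: eq_bigr => e _.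
rewrite /coefs addf_sum //; by apply: eq_bigr => p /eqP ->.
Qed.

Section Bas.
Variables (S : P -> Prop) (hInd : Indep S) (hSp : Spans S).

Definition rep (v : P) : seq (P * R) :=
  proj1_sig (constructive_indefinite_description _ (hSp v)).
Lemma rep_in v : inL S (rep v).
Proof. by rewrite /rep; case: constructive_indefinite_description => s [] /=. Qed.
Lemma rep_eq v : v = lcp (rep v).
Proof. by rewrite /rep; case: constructive_indefinite_description => s [] /=. Qed.

Definition ext (Z : zmodType) (phi : P -> R -> Z) (v : P) : Z :=
  \sum_(p <- rep v) phi p.1 p.2.

Lemma KL (Z : zmodType) (phi : P -> R -> Z) : addf phi ->
  forall t, inL S t -> ext phi (lcp t) = \sum_(p <- t) phi p.1 p.2.
Proof.
move=> ha t ht; rewrite /ext; set r := rep (lcp t).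
pose u := undup (map fst (r ++ t)).
have uu : uniq u by apply: undup_uniq.
have hall : forall s, {subset s <= r ++ t} -> all (fun p => p.1 \in u) s.
  move=> s hs; apply/allP => p hp; rewrite mem_undup; apply/mapP; exists p => //.
  exact: hs.
have hr : all (fun p => p.1 \in u) r by apply: hall => p hp; rewrite mem_cat hp.
have htt : all (fun p => p.1 \in u) t by apply: hall => p hp; rewrite mem_cat hp orbT.
have eq : forall e, e \in u -> coefs r e = coefs t e.
  have h0 : \sum_(e <- u) (coefs r e - coefs t e) *: e = 0.
    under eq_bigr do rewrite scalerBl.
    by rewrite sumrB -!lcp_agg // -rep_eq subrr.
  move=> e he; apply/eqP; rewrite -subr_eq0; apply/eqP.
  apply: (hInd uu _ h0 he) => e' he'.
  move: he'; rewrite mem_undup => /mapP [p hp ->]; move: hp; rewrite mem_cat => /orP [].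
    by apply: rep_in.
  by apply: ht.
rewrite (ext_agg ha uu hr) (ext_agg ha uu htt).
by apply: eq_big_seq => e he; rewrite eq.
Qed.

Lemma ext_lin (Z : lmodType R) (phi : P -> R -> Z) : addf phi ->
  (forall e a c, phi e (a * c) = a *: phi e c) ->
  forall a v w, ext phi (a *: v + w) = a *: ext phi v + ext phi w.
Proof.
move=> ha hz a v w.
rewrite {1}(rep_eq v) {1}(rep_eq w) -lcp_scale -lcp_cat KL //; last first.
  by apply: inL_cat; [apply: inL_scale|]; apply: rep_in.
rewrite big_cat big_map /ext scaler_sumr; congr (_ + _).
by apply: eq_bigr => p _ /=; rewrite hz.
Qed.

End Bas.
End Lin.

Section SpT.
Variables (R : nzRingType) (V : lmodType R) (S : V -> Prop).

Definition spb : pred V := pb (spanP S).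
Fact spb_closed : submod_closed spb.
Proof.
split.
  by apply/pbP; exists [::]; split => //; rewrite /lcp big_nil.
move=> a u v /pbP [s [hs ->]] /pbP [t [ht ->]]; apply/pbP.
exists ([seq (p.1, a * p.2) | p <- s] ++ t); split.
  by apply: inL_cat => //; apply: inL_scale.
by rewrite lcp_cat lcp_scale.
Qed.
HB.instance Definition _ := GRing.isSubmodClosed.Build R V spb spb_closed.
Inductive spanT : predArgType := SpanT u & u \in spb.
Definition spval w : V := let: SpanT u _ := w in u.
HB.instance Definition _ := [isSub of spanT for spval].
HB.instance Definition _ := [Choice of spanT by <:].
HB.instance Definition _ := [SubChoice_isSubZmodule of spanT by <:].
HB.instance Definition _ := [SubZmodule_isSubLmodule of spanT by <:].

Lemma spval_sum (I : Type) (r : seq I) (F : I -> spanT) :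
  spval (\sum_(i <- r) F i) = \sum_(i <- r) spval (F i).
Proof.
elim: r => [|i r IH]; rewrite ?big_nil ?big_cons //; last by rewrite -IH.
Qed.

End SpT.

Section SpB.
Variables (R : nzRingType) (V : lmodType R) (S : V -> Prop).

Lemma Indep_sub (S' : V -> Prop) : Indep S -> (forall e, S' e -> S e) -> Indep S'.
Proof. by move=> h hs s c us ss; apply: h => // e he; apply: hs; apply: ss. Qed.

Lemma in_spb e : S e -> e \in spb S.
Proof.
move=> Se; apply/pbP; exists [:: (e, 1)]; split; first by move=> p; rewrite mem_seq1 => /eqP ->.
by rewrite /lcp big_seq1 scale1r.
Qed.

Definition idxT := {e : V | pb S e}.
Definition bT (i : idxT) : spanT S := SpanT (in_spb (elimT (pbP _ _) (valP i))).
Lemma bT_val i : spval (bT i) = val i. Proof. by []. Qed.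

Lemma spanT_basis : Indep S -> is_basis bT.
Proof.
move=> hI; split.
  case=> v hv; have /pbP [t [ht ev]] := hv.
  pose u := undup (map fst t).
  have uu : uniq u by apply: undup_uniq.
  have hall : all (fun p => p.1 \in u) t.
    by apply/allP => p hp; rewrite mem_undup; apply/mapP; exists p.
  have uS : forall e, e \in u -> S e.
    by move=> e; rewrite mem_undup => /mapP [p hp ->]; apply: ht.
  exists (pmap insub u), (fun i : idxT => coefs t (val i)).
  apply: val_inj; rewrite /= spval_sum ev (lcp_agg uu hall).
  have hu : map val (pmap insub u : seq idxT) = u.
    rewrite (pmap_filter (@insubK _ _ _)) -[RHS]filter_predT; apply: eq_in_filter.
    by move=> e he /=; rewrite (insubT _ (introT (pbP _ _) (uS e he))).
  rewrite -[in LHS]hu big_map; apply: eq_bigr => i _; by rewrite GRing.valZ.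
move=> s c us e0 i hi.
pose c' := fun e : V => if insub e is Some j then c j else 0.
have hc' : forall j : idxT, c' (val j) = c j by move=> j; rewrite /c' valK.
rewrite -hc'; apply: (hI (map val s) c') => //.
- by rewrite map_inj_uniq //; apply: val_inj.
- by move=> e /mapP [j _ ->]; apply/pbP; apply: valP.
- rewrite big_map; move/(congr1 val): e0; rewrite /= spval_sum => e1; rewrite -[RHS]e1.
  by apply: eq_bigr => j _; rewrite hc' GRing.valZ.
- by apply: map_f.
Qed.

Lemma spanT_free : Indep S -> free_lmod (spanT S).
Proof. by move=> h; exists _, bT; apply: spanT_basis. Qed.

End SpB.

Section Sel.
Variables (R : nzRingType) (V W : lmodType R).

Definition sel (S : V -> Prop) (G : V -> W) : V -> R -> W :=
  fun e c => if pb S e then c *: G e else 0.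
Lemma sel_add S G : addf (sel S G).
Proof. by move=> e a b; rewrite /sel; case: pb; rewrite ?scalerDl ?addr0. Qed.
Lemma sel_scale S G e a c : sel S G e (a * c) = a *: sel S G e c.
Proof. by rewrite /sel; case: pb; rewrite ?scalerA ?scaler0. Qed.
Lemma sum_sel_in S G (t : seq (V * R)) : (forall q, q \in t -> S q.1) ->
  \sum_(q <- t) sel S G q.1 q.2 = \sum_(q <- t) q.2 *: G q.1.
Proof. by move=> h; apply: eq_big_seq => q hq; rewrite /sel; case: (pbP S q.1) => // n; case: n; apply: h. Qed.
Lemma sum_sel_out S G (t : seq (V * R)) : (forall q, q \in t -> ~ S q.1) ->
  \sum_(q <- t) sel S G q.1 q.2 = 0.
Proof. by move=> h; apply: big1_seq => q /= hq; rewrite /sel; case: (pbP S q.1) => // n; case: (h q hq). Qed.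

Variables (S : V -> Prop) (hSp : Spans S).
Lemma ext_sel_lcp (S' : V -> Prop) (G : V -> W) v :
  ext hSp (sel S' G) v = lcp [seq (G p.1, p.2) | p <- [seq p <- rep hSp v | pb S' p.1]].
Proof.
rewrite /ext /lcp big_map big_filter [RHS]big_mkcond; apply: eq_bigr => p _.
by rewrite /sel; case: pb.
Qed.
Lemma ext_sel_span (S' : V -> Prop) (G : V -> W) (Sx : W -> Prop) v :
  (forall e, S' e -> Sx (G e)) -> spanP Sx (ext hSp (sel S' G) v).
Proof.
move=> h; rewrite ext_sel_lcp; eexists; split; last by reflexivity.
by move=> q /mapP [p]; rewrite mem_filter => /andP [/pbP hp _] ->; apply: h.
Qed.
End Sel.

Lemma fingen_surj (R : nzRingType) (U V : lmodType R) (L : U -> V) :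
  (forall a u v, L (a *: u + v) = a *: L u + L v) -> (forall v, exists u, L u = v) ->
  fingen_lmod U -> fingen_lmod V.
Proof.
move=> hL hs [s hsp].
have L0 : L 0 = 0.
  move: (hL 1 (0 : U) 0); rewrite !scale1r addr0 => h.
  by apply: (@addrI _ (L 0)); rewrite addr0 -h.
have LD : forall u v, L (u + v) = L u + L v by move=> u v; have := hL 1 u v; rewrite !scale1r.
have LZ : forall a u, L (a *: u) = a *: L u by move=> a u; have := hL a u 0; rewrite !addr0 L0 addr0.
exists (map L s) => v; have [u <-] := hs v; have [c ->] := hsp u.
rewrite size_map; exists c.
rewrite (big_morph L LD L0); apply: eq_bigr => i _.
by rewrite LZ -L0 (nth_map 0) // L0.
Qed.
Section Ring.
Variables (R : nzRingType) (m : R -> Prop) (x : R).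
Hypothesis Hloc : local_with_max m.
Hypothesis Hm2 : forall a b, m a -> m b -> a * b = 0.
Hypothesis Hgen : forall y, m y -> y <> 0 ->
     forall a, (m a <-> exists r, a = r * y) /\ (m a <-> exists r, a = y * r).
Hypothesis Hmx : m x.
Hypothesis Hx0 : x <> 0.

Lemma mlideal : left_ideal m.
Proof. by case: Hloc => [[]]. Qed.
Lemma m0 : m 0. Proof. by case: mlideal. Qed.
Lemma mD a b : m a -> m b -> m (a + b). Proof. by case: mlideal => _ h _; apply: h. Qed.
Lemma mMl r a : m a -> m (r * a). Proof. by case: mlideal => _ _ h; apply: h. Qed.
Lemma m1 : ~ m 1. Proof. by case: Hloc => [[]]. Qed.
Lemma mxr r : m (x * r). Proof. by apply/(proj2 (Hgen Hmx Hx0 _)); exists r. Qed.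
Lemma mrx r : m (r * x). Proof. by apply: mMl. Qed.
Lemma mMr a r : m a -> m (a * r).
Proof. by move/(proj2 (Hgen Hmx Hx0 _)) => [r' ->]; rewrite -mulrA; apply: mxr. Qed.
Lemma mN a : m a -> m (- a). Proof. by move=> h; rewrite -mulN1r; apply: mMl. Qed.
Lemma mB a b : m a -> m b -> m (a - b). Proof. by move=> ha hb; apply: mD => //; apply: mN. Qed.

Definition xdiv (y : R) : R :=
  match excluded_middle_informative (exists r, y = x * r) with
  | left h => proj1_sig (constructive_indefinite_description _ h) | right _ => 0 end.
Lemma xdivP y : m y -> y = x * xdiv y.
Proof.
move=> my; rewrite /xdiv; destruct (excluded_middle_informative _) as [h|h].
  by case: (constructive_indefinite_description _ h).
by case: h; apply/(proj2 (Hgen Hmx Hx0 _)).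
Qed.
Definition divx (y : R) : R :=
  match excluded_middle_informative (exists r, y = r * x) with
  | left h => proj1_sig (constructive_indefinite_description _ h) | right _ => 0 end.
Lemma divxP y : m y -> y = divx y * x.
Proof.
move=> my; rewrite /divx; destruct (excluded_middle_informative _) as [h|h].
  by case: (constructive_indefinite_description _ h).
by case: h; apply/(proj1 (Hgen Hmx Hx0 _)).
Qed.

Lemma unitm a : ~ m a -> exists b, b * a = 1 /\ a * b = 1.
Proof.
have left_inv : forall a, ~ m a -> exists b, b * a = 1.
  move=> a0 na0.
  pose J := fun z => exists r y, m y /\ z = r * a0 + y.
  have lJ : left_ideal J.
    split.
    - by exists 0, 0; split; [apply: m0 | rewrite mul0r addr0].
    - move=> u v [r1 [y1 [h1 ->]]] [r2 [y2 [h2 ->]]]; exists (r1 + r2), (y1 + y2).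
      split; first by apply: mD.
      by rewrite mulrDl addrACA.
    - move=> r u [r1 [y1 [h1 ->]]]; exists (r * r1), (r * y1); split; first by apply: mMl.
      by rewrite mulrDr mulrA.
  case: (classic (J 1)) => [[r [y [my e]]]|nJ].
    exists ((1 + y) * r); rewrite -mulrA.
    have -> : r * a0 = 1 - y by rewrite e addrK.
    by rewrite mulrBr mulr1 mulrDl mul1r (Hm2 my my) addr0 addrK.
  case: Hloc => [[_ _ hmax]] _.
  case: na0; apply: (hmax J lJ nJ) => [u mu|]; first by exists 0, u; rewrite mul0r add0r.
  by exists 1, 0; split; [apply: m0| rewrite mul1r addr0].
move=> na; case: (left_inv a na) => b hb.
have nb : ~ m b by move=> mb; apply: m1; rewrite -hb; apply: mMr.
case: (left_inv b nb) => c hc.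
have ca : c = a by rewrite -[c]mulr1 -hb mulrA hc mul1r.
by exists b; split => //; rewrite -ca.
Qed.

Lemma mx_l c : c * x = 0 -> m c.
Proof.
move=> h; apply: NNPP => nc; case: (unitm nc) => b [hb _]; apply: Hx0.
by rewrite -[x]mul1r -hb -mulrA h mulr0.
Qed.
Lemma mx_r c : x * c = 0 -> m c.
Proof.
move=> h; apply: NNPP => nc; case: (unitm nc) => b [_ hb]; apply: Hx0.
by rewrite -[x]mulr1 -hb mulrA h mul0r.
Qed.
Lemma xm a : m a -> x * a = 0. Proof. by move=> h; apply: Hm2. Qed.
Lemma mx a : m a -> a * x = 0. Proof. by move=> h; apply: Hm2. Qed.
Lemma xx : x * x = 0. Proof. exact: xm. Qed.


Section Mod.
Variable (P : lmodType R).

Definition inx (v : P) := exists w, v = x *: w.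
Lemma inx0 : inx 0. Proof. by exists 0; rewrite scaler0. Qed.
Lemma inxD u v : inx u -> inx v -> inx (u + v).
Proof. by move=> [a ->] [b ->]; exists (a + b); rewrite scalerDr. Qed.
Lemma inxZ r v : inx v -> inx (r *: v).
Proof.
move=> [w ->]; exists (xdiv (r * x) *: w).
by rewrite scalerA scalerA -xdivP //; apply: mrx.
Qed.
Lemma inxN v : inx v -> inx (- v). Proof. by move=> h; rewrite -scaleN1r; apply: inxZ. Qed.
Lemma inxB u v : inx u -> inx v -> inx (u - v).
Proof. by move=> hu hv; apply: inxD => //; apply: inxN. Qed.
Lemma inx_m c (v : P) : m c -> inx (c *: v).
Proof. by move=> mc; exists (xdiv c *: v); rewrite scalerA -xdivP. Qed.
Lemma inx_sum (I : Type) (s : seq I) (F : I -> P) :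
  (forall i, inx (F i)) -> inx (\sum_(i <- s) F i).
Proof. move=> h; elim: s => [|i s IH]; rewrite ?big_nil ?big_cons; [exact: inx0|exact: inxD]. Qed.
Lemma mZx c (w : P) : m c -> c *: (x *: w) = 0.
Proof. by move=> mc; rewrite scalerA mx // scale0r. Qed.

Definition xfree := forall v : P, x *: v = 0 -> inx v.

Lemma free_xfree : free_lmod P -> xfree.
Proof.
move=> [I [b [hsp hind]]] v xv.
have [s [c ev]] := hsp v.
pose u := undup s; pose C j := \sum_(i <- s | i == j) c i.
have ev2 : v = \sum_(j <- u) C j *: b j.
  rewrite ev (@agg _ _ _ s id u) ?undup_uniq //; last first.
    by apply/allP => i hi /=; rewrite mem_undup.
  apply: eq_bigr => j _; rewrite scaler_suml; apply: eq_bigr => i /eqP -> //.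
have hC : forall j, j \in u -> m (C j).
  move=> j hj; apply: mx_r; apply: (hind u (fun j => x * C j) (undup_uniq s)) => //.
  apply: (etrans _ xv); rewrite [in RHS]ev2 scaler_sumr; apply: eq_bigr => i _; by rewrite scalerA.
exists (\sum_(j <- u) xdiv (C j) *: b j); rewrite ev2 scaler_sumr.
by apply: eq_big_seq => j hj; rewrite scalerA -xdivP //; apply: hC.
Qed.


Definition IndM (X : eqType) (F : X -> P) (S : X -> Prop) :=
  forall (s : seq X) (c : X -> R), uniq s -> (forall e, e \in s -> S e) ->
   inx (\sum_(e <- s) c e *: F e) -> forall e, e \in s -> m (c e).

Lemma basis_mod (S : P -> Prop) : xfree -> IndM id S ->
  (forall v, exists t, inL S t /\ exists w, v = lcp t + x *: w) -> Indep S /\ Spans S.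
Proof.
move=> xf hI hS; split.
  move=> s c us ss e0 e1 he0.
  have mc : forall e, e \in s -> m (c e).
    have h0 : inx (\sum_(e <- s) c e *: e) by rewrite e0; exact: inx0.
    exact: (hI s c us ss h0).
  have hx : x *: \sum_(e <- s) xdiv (c e) *: e = 0.
    apply: (etrans _ e0); rewrite scaler_sumr; apply: eq_big_seq => e he.
    by rewrite scalerA -xdivP //; apply: mc.
  have md : forall e, e \in s -> m (xdiv (c e)).
    have [w hw] := xf _ hx.
    have h0 : inx (\sum_(e <- s) xdiv (c e) *: e) by exists w.
    exact: (hI s _ us ss h0).
  by rewrite (xdivP (mc _ he0)) xm //; apply: md.
move=> v; have [t [ht [w ->]]] := hS v; have [t' [ht' [w' ->]]] := hS w.
exists (t ++ [seq (p.1, x * p.2) | p <- t']); split.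
  by apply: inL_cat => //; apply: inL_scale.
by rewrite lcp_cat lcp_scale scalerDr scalerA xx scale0r addr0.
Qed.

Definition PhiF (X : eqType) (F : X -> P) (L : X -> Prop) (s : seq X) :=
  (forall e, e \in s -> L e) /\
  (uniq s -> forall c : X -> R, inx (\sum_(e <- s) c e *: F e) -> forall e, e \in s -> m (c e)).

Lemma Good_IndM (X : eqType) (F : X -> P) L S : GoodS (PhiF F L) S -> IndM F S.
Proof. by move=> g s c us ss; case: (g s ss) => _ h; apply: h. Qed.
Lemma Good_L (X : eqType) (F : X -> P) L S : GoodS (PhiF F L) S -> forall e, S e -> L e.
Proof.
move=> g e Se; case: (g [:: e]) => [e'|h _]; last by apply: h; rewrite mem_head.
by rewrite mem_seq1 => /eqP ->.
Qed.

Definition spanFx (X : eqType) (F : X -> P) (S : X -> Prop) (v : P) :=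
  exists t : seq (X * R), (forall p, p \in t -> S p.1) /\
    exists w, v = \sum_(p <- t) p.2 *: F p.1 + x *: w.

Lemma extend (X : eqType) (F : X -> P) L S y :
  GoodS (PhiF F L) S -> L y -> ~ spanFx F S (F y) -> GoodS (PhiF F L) (addS S y).
Proof.
move=> g Ly nsp s ss; split.
  by move=> e he; case: (ss e he) => [Se|->//]; apply: (Good_L g).
move=> us c hx.
case: (boolP (y \in s)) => hy; last first.
  apply: (Good_IndM g) => // e he; case: (ss e he) => // ey.
  by move: hy; rewrite -ey he.
pose s' := [seq e <- s | e != y].
have ss' : forall e, e \in s' -> S e.
  move=> e; rewrite mem_filter => /andP [ne he]; case: (ss e he) => // ey.
  by rewrite ey eqxx in ne.
have us' : uniq s' by apply: filter_uniq.
have es : \sum_(e <- s) c e *: F e = c y *: F y + \sum_(e <- s') c e *: F e.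
  by rewrite (bigD1_seq y) //= big_filter.
case: (classic (m (c y))) => mcy.
  have hx' : inx (\sum_(e <- s') c e *: F e).
    move: hx; rewrite es => hx; have := inxB hx (inx_m (F y) mcy).
    by rewrite addrC addKr.
  move=> e he; case: (eqVneq e y) => [->//|ne].
  by apply: (Good_IndM g us' ss' hx'); rewrite mem_filter ne.
case: (unitm mcy) => b [hb _]; case: nsp; case: hx => w hw.
exists [seq (e, - (b * c e)) | e <- s']; split.
  by move=> p /mapP [e he ->]; apply: ss'.
exists (xdiv (b * x) *: w).
rewrite scalerA -xdivP; last by apply: mrx.
have -> : F y = b *: (c y *: F y) by rewrite scalerA hb scale1r.
have -> : c y *: F y = x *: w - \sum_(e <- s') c e *: F e by rewrite -hw es addrK.
rewrite scalerBr big_map scaler_sumr -sumrN addrC scalerA; congr (_ + _).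
by apply: eq_bigr => e _; rewrite scalerA scaleNr.
Qed.


Definition coefsX (X : eqType) (t : seq (X * R)) (y : X) : R := \sum_(q <- t | q.1 == y) q.2.

Lemma aggX (X : eqType) (F : X -> P) (t : seq (X * R)) (u : seq X) :
  uniq u -> all (fun q => q.1 \in u) t ->
  \sum_(q <- t) q.2 *: F q.1 = \sum_(y <- u) coefsX t y *: F y.
Proof.
move=> uu ht; rewrite (agg _ uu ht); apply: eq_bigr => y _.
by rewrite /coefsX scaler_suml; apply: eq_bigr => q /eqP ->.
Qed.

Lemma mSum (I : Type) (r : seq I) (G : I -> R) : (forall i, m (G i)) -> m (\sum_(i <- r) G i).
Proof. by move=> h; elim: r => [|i r IH]; rewrite ?big_nil ?big_cons; [apply: m0|apply: mD]. Qed.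

Lemma IndM_pairs (X : eqType) (F : X -> P) (S : X -> Prop) : IndM F S ->
  forall t : seq (X * R), (forall q, q \in t -> S q.1) ->
  inx (\sum_(q <- t) q.2 *: F q.1) -> forall y, m (coefsX t y).
Proof.
move=> hI t ht hx y; pose u := undup (map fst t).
have uu : uniq u by apply: undup_uniq.
have hall : all (fun q => q.1 \in u) t.
  by apply/allP => q hq; rewrite mem_undup; apply/mapP; exists q.
case: (boolP (y \in u)) => hy.
  apply: (hI u _ uu _ _ y hy); last by rewrite -(aggX _ uu hall).
  by move=> e; rewrite mem_undup => /mapP [q hq ->]; apply: ht.
rewrite /coefsX big1_seq; first exact: m0.
move=> q /andP [/eqP e hq]; case/negP: hy; rewrite -e mem_undup; exact: map_f.
Qed.

Lemma coefsX_map (X Y : eqType) (s : seq Y) (g : Y -> X) (c : Y -> R) e :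
  uniq s -> {in s &, injective g} -> e \in s -> coefsX [seq (g z, c z) | z <- s] (g e) = c e.
Proof.
move=> us ig he; rewrite /coefsX big_map /= -big_filter.
rewrite (@eq_in_filter _ _ (pred1 e)); last first.
  move=> z hz /=; apply/eqP/eqP => [h|->//]; exact: ig.
by rewrite filter_pred1_uniq // big_seq1.
Qed.

Lemma spanFx_mem (X : eqType) (F : X -> P) (S : X -> Prop) y : S y -> spanFx F S (F y).
Proof.
move=> Sy; exists [:: (y, 1)]; split; first by move=> q; rewrite mem_seq1 => /eqP ->.
by exists 0; rewrite big_seq1 scale1r scaler0 addr0.
Qed.

Lemma spanFx_lin (X : eqType) (F : X -> P) (S : X -> Prop) a u v :
  spanFx F S u -> spanFx F S v -> spanFx F S (a *: u + v).
Proof.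
move=> [t [ht [w ->]]] [t' [ht' [w' ->]]].
exists ([seq (q.1, a * q.2) | q <- t] ++ t'); split.
  move=> q; rewrite mem_cat => /orP [/mapP [q' hq' ->]|hq]; [exact: ht q' hq'|exact: ht' q hq].
exists (xdiv (a * x) *: w + w').
have e1 : a *: (x *: w) = x *: (xdiv (a * x) *: w) by rewrite !scalerA -xdivP //; exact: mrx.
rewrite scalerDr e1 big_cat big_map /= scalerDr scaler_sumr.
rewrite addrACA; congr (_ + _); congr (_ + _); apply: eq_bigr => q _; by rewrite scalerA.
Qed.

Lemma spanFx_lcp (S : P -> Prop) (t : seq (P * R)) :
  (forall q, q \in t -> spanFx id S q.1) -> spanFx id S (lcp t).
Proof.
elim: t => [|q t IH] ht.
  by exists [::]; split => //; exists 0; rewrite /lcp !big_nil scaler0 addr0.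
rewrite /lcp big_cons; apply: spanFx_lin; first by apply: ht; rewrite mem_head.
by apply: IH => q' hq'; apply: ht; rewrite in_cons hq' orbT.
Qed.
End Mod.

Notation cid := constructive_indefinite_description.

Lemma good_empty (Y : eqType) (Phi : seq Y -> Prop) : Phi [::] -> GoodS Phi (fun _ => False).
Proof. by move=> h [|e s] hs //; case: (hs e (mem_head _ _)). Qed.
Lemma Phi_nil (V : lmodType R) (Y : eqType) (G : Y -> V) L : PhiF G L [::].
Proof. by split. Qed.

Section Main.
Variables (P Q : lmodType R) (f : {linear P -> Q}).
Hypotheses (hP : free_lmod P) (hQ : free_lmod Q).

Definition hf (p : P) : Q :=
  match excluded_middle_informative (inx (f p)) with
  | left h => sval (cid _ h) | right _ => 0 end.
Lemma hfP p : inx (f p) -> f p = x *: hf p.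
Proof.
rewrite /hf => h; destruct (excluded_middle_informative _) as [h'|h'] => //.
by case: (cid _ h').
Qed.

Definition Xt := (P + P)%type.
Definition FF (y : Xt) : Q := match y with inl a => f a | inr b => hf b end.
Definition un (y : Xt) : P := match y with inl a => a | inr b => b end.

Definition LL1 (y : Xt) : Prop := if y is inl _ then True else False.
Definition Z1 := cid _ (zorn (good_empty (Phi_nil FF LL1))).
Definition T1 := sval Z1.
Lemma T1_good : GoodS (PhiF FF LL1) T1. Proof. by case: (svalP Z1). Qed.
Lemma T1_max y : GoodS (PhiF FF LL1) (addS T1 y) -> T1 y. Proof. by case: (svalP Z1) => _ _; apply. Qed.
Lemma T1_inl y : T1 y -> exists a, y = inl a.
Proof. by move=> h; case: y h (Good_L T1_good h) => // a _ _; exists a. Qed.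
Lemma max1 p : spanFx FF T1 (f p).
Proof.
apply: NNPP => ns; apply: (ns); apply: (spanFx_mem FF (y := inl p)).
by apply: T1_max; apply: extend => //; apply: T1_good.
Qed.

Definition LL2 (y : Xt) : Prop := match y with inl a => T1 (inl a) | inr b => inx (f b) end.
Lemma T1_good2 : GoodS (PhiF FF LL2) T1.
Proof.
move=> s ss; split; last by case: (T1_good ss).
by move=> e he; have [a ea] := T1_inl (ss e he); move: (ss e he); rewrite ea.
Qed.
Definition Z2 := cid _ (zorn T1_good2).
Definition T2 := sval Z2.
Lemma T2_good : GoodS (PhiF FF LL2) T2. Proof. by case: (svalP Z2). Qed.
Lemma T2_max y : GoodS (PhiF FF LL2) (addS T2 y) -> T2 y. Proof. by case: (svalP Z2) => _ _; apply. Qed.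
Lemma T1_T2 y : T1 y -> T2 y. Proof. by case: (svalP Z2) => h _ _; apply: h. Qed.

Definition A (a : P) := T2 (inl a).
Definition B (b : P) := T2 (inr b).
Lemma A_T1 a : A a -> T1 (inl a). Proof. by move=> h; apply: (Good_L T2_good h). Qed.
Lemma B_inx b : B b -> inx (f b). Proof. by move=> h; apply: (Good_L T2_good h). Qed.
Lemma B_fh b : B b -> f b = x *: hf b. Proof. by move=> h; apply: hfP; apply: B_inx. Qed.
Lemma max2 p : inx (f p) -> spanFx FF T2 (hf p).
Proof.
move=> hx; apply: NNPP => ns; apply: (ns); apply: (spanFx_mem FF (y := inr p)).
by apply: T2_max; apply: extend => //; apply: T2_good.
Qed.
Lemma T2_ninx y : T2 y -> ~ inx (FF y).
Proof.
move=> Ty hx; apply: m1.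
have := Good_IndM T2_good (s := [:: y]) (c := fun _ => 1) => /= h.
apply: (h _ _ _ y) => //; first by move=> e; rewrite mem_seq1 => /eqP ->.
  by rewrite big_seq1 scale1r.
by rewrite mem_head.
Qed.
Lemma T2_inj y1 y2 : T2 y1 -> T2 y2 -> FF y1 = FF y2 -> y1 = y2.
Proof.
move=> T1y T2y e; apply: NNPP => ne; apply: m1.
have := Good_IndM T2_good (s := [:: y1; y2]) (c := fun y => if y == y1 then 1 else -1) => h.
have := h _ _ _ y1; rewrite eqxx; apply.
- by rewrite /= inE andbT; apply/eqP.
- by move=> y; rewrite !inE => /orP [] /eqP ->.
- rewrite big_cons big_seq1 eqxx scale1r.
  have -> : (y2 == y1) = false by apply/eqP => h'; apply: ne.
  by rewrite scaleN1r e subrr; apply: inx0.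
- by rewrite mem_head.
Qed.

Definition U (e : P) := A e \/ B e \/ f e = 0.

Lemma spanU p : spanP U p.
Proof.
have [t [ht [w ew]]] := max1 p.
pose t1 := [seq (un q.1, q.2) | q <- t].
have ft1 : f (lcp t1) = \sum_(q <- t) q.2 *: FF q.1.
  rewrite /lcp big_map linear_sum; apply: eq_big_seq => q hq.
  by rewrite linearZ /=; have [a ->] := T1_inl (ht q hq).
pose p1 := p - lcp t1.
have fp1 : f p1 = x *: w by rewrite /p1 linearB ft1 ew addrC addKr.
have [t' [ht' [w' ew']]] := max2 (ex_intro _ w fp1).
pose coef2 (q : Xt * R) := match q.1 with inl _ => x * q.2 | inr _ => divx (x * q.2) end.
pose t2 := [seq (un q.1, coef2 q) | q <- t'].
have ft2 : f (lcp t2) = f p1.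
  rewrite (hfP (ex_intro _ w fp1)) ew' scalerDr scalerA xx scale0r addr0.
  rewrite /lcp big_map linear_sum scaler_sumr; apply: eq_big_seq => q hq.
  rewrite linearZ /= /coef2; case: q hq => [[a|b] c] hq /=; first by rewrite scalerA.
  rewrite (B_fh (ht' _ hq)) scalerA scalerA -divxP //; exact: mxr.
pose k := p - (lcp t1 + lcp t2).
have fk : f k = 0 by rewrite /k opprD addrA linearB -/p1 ft2 subrr.
exists (t1 ++ t2 ++ [:: (k, 1)]); split.
  move=> q; rewrite !mem_cat => /orP [/mapP [q' hq' ->]|/orP [/mapP [q' hq' ->]|]] /=.
  - by have [a ea] := T1_inl (ht q' hq'); rewrite ea; left; rewrite /A -ea; apply: T1_T2; apply: ht.
  - by case: q' hq' => [[a|b] c] hq' /=; [left|right; left]; apply: (ht' _ hq').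
  - by rewrite mem_seq1 => /eqP -> /=; right; right.
rewrite !lcp_cat /lcp big_seq1 scale1r -/(lcp t1) -/(lcp t2) addrA addrC /k subrK //.
Qed.

Definition gAB (e : P) : Xt := if pb A e then inl e else inr e.
Lemma gAB_inj : injective gAB.
Proof. by move=> e1 e2; rewrite /gAB; case: (pb A e1); case: (pb A e2) => h; case: h. Qed.

Lemma coefsX_cat (Y : eqType) (t1 t2 : seq (Y * R)) y :
  coefsX (t1 ++ t2) y = coefsX t1 y + coefsX t2 y.
Proof. by rewrite /coefsX big_cat. Qed.

Lemma coefsX_inr (t : seq (Xt * R)) b : (forall q, q \in t -> T1 q.1) -> coefsX t (inr b) = 0.
Proof.
move=> ht; rewrite /coefsX big1_seq // => q /andP [/eqP e hq].
by have [a ea] := T1_inl (ht q hq); rewrite ea in e.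
Qed.

Lemma AB_ind : IndM id (fun e => A e \/ B e).
Proof.
move=> s c us ss [w ew].
have xfQ := free_xfree hQ.
pose cA e := if pb A e then c e else c e * x.
pose tx := [seq (gAB e, cA e) | e <- s].
have ftx : \sum_(q <- tx) q.2 *: FF q.1 = x *: f w.
  have ew' : \sum_(e <- s) c e *: e = x *: w := ew.
  have fe : f (\sum_(e <- s) c e *: e) = x *: f w by rewrite ew' linearZ.
  rewrite -fe linear_sum big_map; apply: eq_big_seq => e he.
  rewrite linearZ /= /gAB /cA; case: (pbP A e) => [//|nA].
  have Be : B e by case: (ss e he).
  by rewrite /= (B_fh Be) scalerA.
have [t1 [ht1 [w1 ew1]]] := max1 w.
pose t1' := [seq (q.1, - (x * q.2)) | q <- t1].
have ft1' : \sum_(q <- t1') q.2 *: FF q.1 = - (x *: f w).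
  rewrite ew1 scalerDr scalerA xx scale0r addr0 big_map scaler_sumr -sumrN.
  by apply: eq_bigr => q _; rewrite scaleNr scalerA.
have inT2 : forall e, e \in s -> T2 (gAB e).
  move=> e he; rewrite /gAB; case: (pbP A e) => // nA.
  by case: (ss e he).
have t1T1 : forall q, q \in t1' -> T1 q.1 by move=> q /mapP [q' hq' ->]; exact: ht1 q' hq'.
have hm := IndM_pairs (Good_IndM T2_good) (t := tx ++ t1').
have mA : forall e, e \in s -> A e -> m (c e).
  move=> e he Ae.
  have h1 : m (coefsX (tx ++ t1') (inl e)).
    apply: hm.
      move=> q; rewrite mem_cat => /orP [/mapP [e' he' ->]|hq]; first exact: inT2.
      by apply: T1_T2; apply: t1T1.
    by rewrite big_cat ftx ft1'; apply: inxB; exists (f w).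
  rewrite coefsX_cat in h1.
  have -> : c e = coefsX tx (inl e).
    have := coefsX_map cA us (in2W gAB_inj) he; rewrite /gAB; case: (pbP A e) => // _ ->.
    by rewrite /cA; case: (pbP A e).
  have h2 : m (coefsX t1' (inl e)).
    rewrite /coefsX /t1' big_map big_mkcond /=; apply: mSum => q.
    by case: (_ == _); [apply: mN; apply: mxr|apply: m0].
  by have := mB h1 h2; rewrite addrK.
pose dA e := if pb A e then xdiv (c e) else xdiv (c e * x).
pose ty := [seq (gAB e, dA e) | e <- s] ++ [seq (q.1, - q.2) | q <- t1].
have fty : x *: \sum_(q <- ty) q.2 *: FF q.1 = 0.
  rewrite big_cat !big_map scalerDr !scaler_sumr.
  have -> : \sum_(i <- s) x *: (dA i *: FF (gAB i)) = \sum_(q <- tx) q.2 *: FF q.1.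
    rewrite big_map; apply: eq_big_seq => e he; rewrite scalerA /dA /cA /gAB.
    case: (pbP A e) => Ae; first by rewrite -xdivP //; apply: mA.
    by rewrite -xdivP //; apply: mrx.
  rewrite ftx -[RHS](subrr (x *: f w)) -ft1' big_map; congr (_ + _).
  by apply: eq_bigr => q _; rewrite scalerA mulrN.
have [w2 ew2] := xfQ _ fty.
move=> e he; case: (pbP A e) => Ae; first exact: mA.
have Be : B e by case: (ss e he).
have h1 : m (coefsX ty (inr e)).
  apply: (IndM_pairs (Good_IndM T2_good)); last by exists w2.
  move=> q; rewrite mem_cat => /orP [/mapP [e' he' ->]|/mapP [q' hq' ->]]; first exact: inT2.
  by apply: T1_T2; exact: ht1 q' hq'.
rewrite coefsX_cat (@coefsX_inr [seq (q.1, - q.2) | q <- t1]) ?addr0 in h1; last by move=> q /mapP [q' hq' ->]; exact: ht1 q' hq'.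
have := coefsX_map dA us (in2W gAB_inj) he; rewrite /gAB; case: (pbP A e) => // _ e1.
rewrite /gAB in h1; case: (pbP A e) h1 => // _; rewrite e1 /dA; case: (pbP A e) => // _ h1.
by apply: mx_l; rewrite (xdivP (mrx (c e))) xm.
Qed.

Lemma AB_good3 : GoodS (PhiF id U) (fun e => A e \/ B e).
Proof.
move=> s ss; split; last by move=> us c hx; apply: AB_ind.
by move=> e he; case: (ss e he) => h; [left|right; left].
Qed.
Definition Z3 := cid _ (zorn AB_good3).
Definition T3 := sval Z3.
Lemma T3_good : GoodS (PhiF id U) T3. Proof. by case: (svalP Z3). Qed.
Lemma T3_max y : GoodS (PhiF id U) (addS T3 y) -> T3 y. Proof. by case: (svalP Z3) => _ _; apply. Qed.
Lemma AB_T3 e : A e \/ B e -> T3 e. Proof. by case: (svalP Z3) => h _ _; apply: h. Qed.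
Lemma max3 e : U e -> spanFx id T3 e.
Proof.
move=> Ue; apply: NNPP => ns; apply: (ns); apply: (spanFx_mem id (y := e)).
by apply: T3_max; apply: extend => //; apply: T3_good.
Qed.
Lemma T3_basis : Indep T3 /\ Spans T3.
Proof.
apply: basis_mod (free_xfree hP) (Good_IndM T3_good) _ => v.
have [t [ht ->]] := spanU v.
exact: (spanFx_lcp (fun q hq => max3 (ht q hq))).
Qed.
Lemma T3_U e : T3 e -> U e. Proof. exact: (Good_L T3_good). Qed.

Definition T0Q (q : Q) := exists y, T2 y /\ FF y = q.
Definition pre (q : Q) : Xt :=
  match excluded_middle_informative (T0Q q) with
  | left h => sval (cid _ h) | right _ => inl 0 end.
Lemma preP q : T0Q q -> T2 (pre q) /\ FF (pre q) = q.
Proof.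
rewrite /pre => h; destruct (excluded_middle_informative _) as [h'|h'] => //.
by case: (cid _ h').
Qed.
Lemma good4 : GoodS (PhiF id (fun _ : Q => True)) T0Q.
Proof.
move=> s ss; split => // us c hx e he.
pose tq := [seq (pre q, c q) | q <- s].
have := IndM_pairs (Good_IndM T2_good) (t := tq) _ _ (pre e).
rewrite coefsX_map //; first apply.
- by move=> q /mapP [q' hq' ->]; case: (preP (ss q' hq')).
- rewrite big_map; move: hx; congr inx; apply: eq_big_seq => q hq.
  by case: (preP (ss q hq)) => _ ->.
- move=> q1 q2 h1 h2 e12.
  by case: (preP (ss q1 h1)) => _ <-; case: (preP (ss q2 h2)) => _ <-; rewrite e12.
Qed.
Definition Z4 := cid _ (zorn good4).
Definition D := sval Z4.
Lemma D_good : GoodS (PhiF id (fun _ : Q => True)) D. Proof. by case: (svalP Z4). Qed.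
Lemma D_max y : GoodS (PhiF id (fun _ : Q => True)) (addS D y) -> D y.
Proof. by case: (svalP Z4) => _ _; apply. Qed.
Lemma T0Q_D q : T0Q q -> D q. Proof. by case: (svalP Z4) => h _ _; apply: h. Qed.
Lemma max4 q : spanFx id D q.
Proof.
apply: NNPP => ns; apply: (ns); apply: (spanFx_mem id (y := q)).
by apply: D_max; apply: extend => //; apply: D_good.
Qed.
Lemma D_basis : Indep D /\ Spans D.
Proof. exact: basis_mod (free_xfree hQ) (Good_IndM D_good) (fun v => max4 v). Qed.

Definition C (e : P) := T3 e /\ ~ A e /\ ~ B e.
Definition FA (q : Q) := exists a, A a /\ f a = q.
Definition HB (q : Q) := exists b, B b /\ hf b = q.
Definition D2 (q : Q) := D q /\ ~ FA q /\ ~ HB q.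

Definition finv (q : Q) : P :=
  match excluded_middle_informative (FA q) with
  | left h => sval (cid _ h) | right _ => 0 end.
Lemma finvP q : FA q -> A (finv q) /\ f (finv q) = q.
Proof.
rewrite /finv => h; destruct (excluded_middle_informative _) as [h'|h'] => //.
by case: (cid _ h').
Qed.
Definition hinv (q : Q) : P :=
  match excluded_middle_informative (HB q) with
  | left h => sval (cid _ h) | right _ => 0 end.
Lemma hinvP q : HB q -> B (hinv q) /\ hf (hinv q) = q.
Proof.
rewrite /hinv => h; destruct (excluded_middle_informative _) as [h'|h'] => //.
by case: (cid _ h').
Qed.

Lemma AB_disj e : A e -> B e -> False.
Proof. by move=> Ae Be; apply: (T2_ninx Ae); rewrite /= (B_fh Be); exists (hf e). Qed.
Lemma f_injA a a' : A a -> A a' -> f a = f a' -> a = a'.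
Proof. by move=> h1 h2 e; have := T2_inj h1 h2 e; case. Qed.
Lemma hf_injB b b' : B b -> B b' -> hf b = hf b' -> b = b'.
Proof. by move=> h1 h2 e; have := T2_inj h1 h2 e; case. Qed.
Lemma FAHB q : FA q -> HB q -> False.
Proof. by move=> [a [Aa <-]] [b [Bb e]]; have := T2_inj Aa Bb (esym e). Qed.
Lemma finv_f a : A a -> finv (f a) = a.
Proof.
move=> Aa; have [h1 h2] := finvP (ex_intro _ a (conj Aa erefl)); exact: f_injA h1 Aa h2.
Qed.
Lemma hinv_h b : B b -> hinv (hf b) = b.
Proof.
move=> Bb; have [h1 h2] := hinvP (ex_intro _ b (conj Bb erefl)); exact: hf_injB h1 Bb h2.
Qed.
Lemma FA_D q : FA q -> D q.
Proof. by move=> [a [Aa <-]]; apply: T0Q_D; exists (inl a). Qed.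
Lemma HB_D q : HB q -> D q.
Proof. by move=> [b [Bb <-]]; apply: T0Q_D; exists (inr b). Qed.
Lemma C_f e : C e -> f e = 0.
Proof. by move=> [T [nA nB]]; case: (T3_U T) => [//|[//|//]]. Qed.
Lemma A_T3 e : A e -> T3 e. Proof. by move=> h; apply: AB_T3; left. Qed.
Lemma B_T3 e : B e -> T3 e. Proof. by move=> h; apply: AB_T3; right. Qed.

Definition hI3 := proj1 T3_basis.
Definition hS3 := proj2 T3_basis.
Definition hID := proj1 D_basis.
Definition hSD := proj2 D_basis.

Definition pA := ext hS3 (sel A id).
Definition pB := ext hS3 (sel B id).
Definition pC := ext hS3 (sel C id).
Definition selx (e : P) (c : R) : P := if pb B e then (c * x) *: e else 0.
Definition gN := ext hS3 selx.
Definition hext := ext hS3 (sel B hf).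
Definition qA := ext hSD (sel FA finv).
Definition qB := ext hSD (sel HB hinv).
Definition qC := ext hSD (sel D2 id).

Lemma selx_add : addf selx.
Proof. by move=> e a b; rewrite /selx; case: pb; rewrite ?mulrDl ?scalerDl ?addr0. Qed.

Lemma gN_sp v : gN v \in spb B.
Proof.
apply/pbP; exists [seq (p.1, p.2 * x) | p <- [seq p <- rep hS3 v | pb B p.1]]; split.
  by move=> q /mapP [p]; rewrite mem_filter => /andP [/pbP h _] ->.
rewrite /gN /ext /lcp big_map big_filter [RHS]big_mkcond; apply: eq_bigr => p _.
by rewrite /selx; case: pb.
Qed.
Lemma pA_sp p : pA p \in spb A. Proof. by apply/pbP; apply: ext_sel_span. Qed.
Lemma pB_sp p : pB p \in spb B. Proof. by apply/pbP; apply: ext_sel_span. Qed.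
Lemma pC_sp p : pC p \in spb C. Proof. by apply/pbP; apply: ext_sel_span. Qed.
Lemma qA_sp q : qA q \in spb A.
Proof. by apply/pbP; apply: ext_sel_span => e h; case: (finvP h). Qed.
Lemma qB_sp q : qB q \in spb B.
Proof. by apply/pbP; apply: ext_sel_span => e h; case: (hinvP h). Qed.
Lemma qC_sp q : qC q \in spb D2. Proof. by apply/pbP; apply: ext_sel_span. Qed.

Lemma inL_T3 tm tn tv : inL A tm -> inL B tn -> inL C tv -> inL T3 (tm ++ tn ++ tv).
Proof.
move=> hm hn hv; apply: inL_cat; first by move=> q hq; apply: A_T3; apply: hm.
apply: inL_cat; first by move=> q hq; apply: B_T3; apply: hn.
by move=> q hq; case: (hv q hq).
Qed.

Lemma E1 tm tn tv : inL A tm -> inL B tn -> inL C tv ->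
  [/\ pA (lcp (tm ++ tn ++ tv)) = lcp tm, pB (lcp (tm ++ tn ++ tv)) = lcp tn &
      pC (lcp (tm ++ tn ++ tv)) = lcp tv].
Proof.
move=> hm hn hv; have hT := inL_T3 hm hn hv.
have nAn : forall q, q \in tn -> ~ A q.1 by move=> q hq Aq; exact: (AB_disj Aq (hn q hq)).
have nAv : forall q, q \in tv -> ~ A q.1 by move=> q hq; case: (hv q hq) => _ [].
have nBm : forall q, q \in tm -> ~ B q.1 by move=> q hq Bq; exact: (AB_disj (hm q hq) Bq).
have nBv : forall q, q \in tv -> ~ B q.1 by move=> q hq; case: (hv q hq) => _ [].
have nCm : forall q, q \in tm -> ~ C q.1 by move=> q hq [_ [h _]]; exact: h (hm q hq).
have nCn : forall q, q \in tn -> ~ C q.1 by move=> q hq [_ [_ h]]; exact: h (hn q hq).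
rewrite /pA /pB /pC !(KL hI3 hS3 (sel_add _ _) hT) !big_cat /=; split.
- by rewrite (sum_sel_in _ hm) (sum_sel_out _ nAn) (sum_sel_out _ nAv) !addr0.
- by rewrite (sum_sel_in _ hn) (sum_sel_out _ nBm) (sum_sel_out _ nBv) addr0 add0r.
- by rewrite (sum_sel_in _ hv) (sum_sel_out _ nCm) (sum_sel_out _ nCn) !add0r.
Qed.

Lemma E2 p : pA p + pB p + pC p = p.
Proof.
rewrite /pA /pB /pC /ext -!big_split [RHS](rep_eq hS3 p) /lcp.
apply: eq_big_seq => q hq /=; have T := rep_in hq.
rewrite /sel; case: (pbP A q.1) => Ae.
  rewrite pbF; last by move=> Be; apply: (AB_disj Ae Be).
  by rewrite pbF ?addr0 //; case=> _ [].
case: (pbP B q.1) => Be.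
  by rewrite pbF ?add0r ?addr0 //; case=> _ [].
by rewrite pbT ?add0r //.
Qed.

Lemma f_lcp t : f (lcp t) = lcp [seq (f p.1, p.2) | p <- t].
Proof. by rewrite /lcp linear_sum big_map; apply: eq_bigr => p _; rewrite linearZ. Qed.
Lemma hext_lcp t : inL B t -> hext (lcp t) = lcp [seq (hf p.1, p.2) | p <- t].
Proof.
move=> ht; rewrite /hext (KL hI3 hS3 (sel_add _ _)); last by move=> q hq; apply: B_T3; apply: ht.
by rewrite (sum_sel_in _ ht) /lcp big_map.
Qed.

Lemma E3 tm tn tw : inL A tm -> inL B tn -> inL D2 tw ->
  let qq := f (lcp tm) + hext (lcp tn) + lcp tw in
  [/\ qA qq = lcp tm, qB qq = lcp tn & qC qq = lcp tw].
Proof.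
move=> hm hn hw qq.
have eqq : qq = lcp ([seq (f p.1, p.2) | p <- tm] ++ [seq (hf p.1, p.2) | p <- tn] ++ tw).
  by rewrite !lcp_cat -f_lcp -hext_lcp // addrA.
have FAm : forall p, p \in tm -> FA (f p.1) by move=> p hp; exists p.1; split => //; apply: hm.
have HBn : forall p, p \in tn -> HB (hf p.1) by move=> p hp; exists p.1; split => //; apply: hn.
have hD : inL D ([seq (f p.1, p.2) | p <- tm] ++ [seq (hf p.1, p.2) | p <- tn] ++ tw).
  apply: inL_cat; first by move=> q /mapP [p hp ->]; apply: FA_D; apply: FAm.
  apply: inL_cat; first by move=> q /mapP [p hp ->]; apply: HB_D; apply: HBn.
  by move=> q hq; case: (hw q hq).
rewrite /qA /qB /qC eqq !(KL hID hSD (sel_add _ _) hD) !big_cat !big_map /=; split.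
- have z1 : \sum_(p <- tn) sel FA finv (hf p.1) p.2 = 0.
    by apply: big1_seq => p /= hp; rewrite /sel pbF // => h; apply: (FAHB h); apply: HBn.
  have z2 : \sum_(q <- tw) sel FA finv q.1 q.2 = 0.
    by apply: big1_seq => q /= hq; rewrite /sel pbF //; case: (hw q hq) => _ [].
  rewrite z1 z2 !addr0; apply: eq_big_seq => p hp.
  by rewrite /sel pbT ?finv_f //; [exact: hm p hp|exact: FAm].
- have z1 : \sum_(p <- tm) sel HB hinv (f p.1) p.2 = 0.
    by apply: big1_seq => p /= hp; rewrite /sel pbF // => h; apply: (FAHB _ h); apply: FAm.
  have z2 : \sum_(q <- tw) sel HB hinv q.1 q.2 = 0.
    by apply: big1_seq => q /= hq; rewrite /sel pbF //; case: (hw q hq) => _ [].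
  rewrite z1 z2 addr0 add0r; apply: eq_big_seq => p hp.
  by rewrite /sel pbT ?hinv_h //; [exact: hn p hp|exact: HBn].
- have z1 : \sum_(p <- tm) sel D2 id (f p.1) p.2 = 0.
    by apply: big1_seq => p /= hp; rewrite /sel pbF // => [[_ [h _]]]; apply: h; apply: FAm.
  have z2 : \sum_(p <- tn) sel D2 id (hf p.1) p.2 = 0.
    by apply: big1_seq => p /= hp; rewrite /sel pbF // => [[_ [_ h]]]; apply: h; apply: HBn.
  rewrite z1 z2 !add0r; apply: eq_big_seq => q hq.
  by rewrite /sel pbT //; apply: hw.
Qed.

Lemma E4 q : f (qA q) + hext (qB q) + qC q = q.
Proof.
have e1 : f (qA q) = \sum_(p <- rep hSD q) sel FA id p.1 p.2.
  rewrite /qA /ext linear_sum; apply: eq_bigr => p _; rewrite /sel.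
  case: (pbP FA p.1) => h; last exact: linear0.
  by rewrite linearZ; case: (finvP h) => _ ->.
have e2 : hext (qB q) = \sum_(p <- rep hSD q) sel HB id p.1 p.2.
  rewrite /qB ext_sel_lcp hext_lcp; last first.
    by move=> p' /mapP [p]; rewrite mem_filter => /andP [/pbP h _] ->; case: (hinvP h).
  rewrite /lcp !big_map big_filter big_mkcond /=; apply: eq_bigr => p _; rewrite /sel.
  by case: (pbP HB p.1) => h //; case: (hinvP h) => _ ->.
rewrite e1 e2 /qC /ext -!big_split [RHS](rep_eq hSD q) /lcp.
apply: eq_big_seq => p hp /=; have Dp := rep_in hp.
rewrite /sel; case: (pbP FA p.1) => h1.
  rewrite pbF; last by move=> h2; apply: (FAHB h1 h2).
  by rewrite pbF ?addr0 //; case=> _ [].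
case: (pbP HB p.1) => h2.
  by rewrite pbF ?add0r ?addr0 //; case=> _ [].
by rewrite pbT ?add0r //.
Qed.

Section E5.
Variable p : P.
Let r := rep hS3 p.
Let tf := [seq (if pb A q.1 then (f q.1, q.2) else (hf q.1, q.2 * x)) |
            q <- [seq q <- r | pb A q.1 || pb B q.1]].

Lemma fp_tf : f p = lcp tf.
Proof.
rewrite {1}(rep_eq hS3 p) f_lcp /lcp !big_map big_filter [RHS]big_mkcond.
apply: eq_big_seq => q hq /=; have T := rep_in hq.
case: (pbP A q.1) => Ae //=; case: (pbP B q.1) => Be /=.
  by rewrite (B_fh Be) scalerA.
by rewrite C_f ?scaler0.
Qed.

Lemma tf_D : inL D tf.
Proof.
move=> q' /mapP [q]; rewrite mem_filter => /andP [hAB hq] ->.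
case: (pbP A q.1) => Ae /=; first by apply: FA_D; exists q.1.
case: (pbP B q.1) => Be; first by apply: HB_D; exists q.1.
by move: hAB; rewrite pbF // pbF.
Qed.

Lemma sum_tf (Z : zmodType) (phi : Q -> R -> Z) :
  \sum_(q' <- tf) phi q'.1 q'.2 = \sum_(q <- r) (if pb A q.1 then phi (f q.1) q.2
     else if pb B q.1 then phi (hf q.1) (q.2 * x) else 0).
Proof.
rewrite big_map big_filter big_mkcond; apply: eq_bigr => q _.
by case: (pb A q.1); case: (pb B q.1).
Qed.

Lemma E5A : qA (f p) = pA p.
Proof.
rewrite fp_tf /qA (KL hID hSD (sel_add _ _) tf_D) sum_tf /pA /ext -/r.
apply: eq_big_seq => q hq; rewrite /sel.
case: (pbP A q.1) => Ae.
  by rewrite pbT ?finv_f //; exists q.1.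
case: (pbP B q.1) => Be //; rewrite pbF // => h.
by apply: (FAHB h); exists q.1.
Qed.

Lemma E5B : qB (f p) = gN (pB p).
Proof.
rewrite fp_tf /qB (KL hID hSD (sel_add _ _) tf_D) sum_tf.
rewrite /pB ext_sel_lcp /gN (KL hI3 hS3 selx_add); last first.
  by move=> q' /mapP [q]; rewrite mem_filter => /andP [/pbP h _] ->; apply: B_T3.
rewrite big_map big_filter [RHS]big_mkcond -/r /=.
apply: eq_big_seq => q hq; rewrite /sel /selx.
case: (pbP A q.1) => Ae.
  rewrite pbF; last by move=> [b [Bb e]]; have := T2_inj Ae Bb (esym e).
  by rewrite pbF // => Be; apply: (AB_disj Ae Be).
case: (pbP B q.1) => Be //; rewrite (@pbT _ HB (hf q.1)); last by exists q.1.
by rewrite hinv_h // pbT.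
Qed.

Lemma E5C : qC (f p) = 0.
Proof.
rewrite fp_tf /qC (KL hID hSD (sel_add _ _) tf_D) sum_tf big1 // => q _.
rewrite /sel; case: (pbP A q.1) => Ae.
  by rewrite pbF // => [[_ [h _]]]; apply: h; exists q.1.
case: (pbP B q.1) => Be //; rewrite pbF // => [[_ [_ h]]]; apply: h; by exists q.1.
Qed.
End E5.

Definition MT := spanT A.
Definition NT := spanT B.
Definition VT := spanT C.
Definition WT := spanT D2.
Definition phi (p : P) : MT * NT * VT := (insubd 0 (pA p), insubd 0 (pB p), insubd 0 (pC p)).
Definition psi (q : Q) : MT * NT * WT := (insubd 0 (qA q), insubd 0 (qB q), insubd 0 (qC q)).
Definition gg (n : NT) : NT := insubd 0 (gN (val n)).

Lemma phi_lin : linear phi.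
Proof.
move=> a u v; rewrite /phi; congr (_, _, _); apply: val_inj;
  rewrite GRing.valD GRing.valZ !insubdK ?pA_sp ?pB_sp ?pC_sp //; unfold pA, pB, pC.
- exact: (ext_lin hI3 hS3 (sel_add A id) (@sel_scale _ _ _ A id) a u v).
- exact: (ext_lin hI3 hS3 (sel_add B id) (@sel_scale _ _ _ B id) a u v).
- exact: (ext_lin hI3 hS3 (sel_add C id) (@sel_scale _ _ _ C id) a u v).
Qed.

Lemma psi_lin : linear psi.
Proof.
move=> a u v; rewrite /psi; congr (_, _, _); apply: val_inj;
  rewrite GRing.valD GRing.valZ !insubdK ?qA_sp ?qB_sp ?qC_sp //; unfold qA, qB, qC.
- exact: (ext_lin hID hSD (sel_add FA finv) (@sel_scale _ _ _ FA finv) a u v).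
- exact: (ext_lin hID hSD (sel_add HB hinv) (@sel_scale _ _ _ HB hinv) a u v).
- exact: (ext_lin hID hSD (sel_add D2 id) (@sel_scale _ _ _ D2 id) a u v).
Qed.

Lemma sp_lcp (V : lmodType R) (S : V -> Prop) (w : spanT S) : exists t, inL S t /\ val w = lcp t.
Proof. by have /pbP := valP w. Qed.

Lemma phi_bij : bijective phi.
Proof.
exists (fun t => val t.1.1 + val t.1.2 + val t.2).
  by move=> p /=; rewrite !insubdK ?pA_sp ?pB_sp ?pC_sp // E2.
case=> [[a b] c] /=.
have [tm [hm ea]] := sp_lcp a; have [tn [hn eb]] := sp_lcp b; have [tv [hv ec]] := sp_lcp c.
have e : val a + val b + val c = lcp (tm ++ tn ++ tv) by rewrite !lcp_cat ea eb ec addrA.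
have [e1 e2 e3] := E1 hm hn hv.
rewrite /phi e; congr (_, _, _); apply: val_inj; rewrite insubdK ?pA_sp ?pB_sp ?pC_sp //.
- by rewrite e1.
- by rewrite e2.
- by rewrite e3.
Qed.

Lemma psi_bij : bijective psi.
Proof.
exists (fun t => f (val t.1.1) + hext (val t.1.2) + val t.2).
  by move=> q /=; rewrite !insubdK ?qA_sp ?qB_sp ?qC_sp // E4.
case=> [[a b] c] /=.
have [tm [hm ea]] := sp_lcp a; have [tn [hn eb]] := sp_lcp b; have [tw [hw ec]] := sp_lcp c.
have [e1 e2 e3] := E3 hm hn hw.
rewrite /psi ea eb ec; congr (_, _, _); apply: val_inj; rewrite insubdK ?qA_sp ?qB_sp ?qC_sp //.
- by rewrite e1.
- by rewrite e2.
- by rewrite e3.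
Qed.

Lemma val_sumT (V : lmodType R) (S : V -> Prop) (I : Type) (r : seq I) (F : I -> spanT S) :
  val (\sum_(i <- r) F i) = \sum_(i <- r) val (F i).
Proof. exact: spval_sum. Qed.

Lemma gg_rmul : rmul_coord (@bT _ _ B) x gg.
Proof.
move=> s c; apply: val_inj; rewrite insubdK ?gN_sp // !val_sumT.
have e : \sum_(i <- s) val (c i *: bT i) = lcp [seq (val i, c i) | i <- s].
  by rewrite /lcp big_map; apply: eq_bigr => i _; rewrite GRing.valZ.
rewrite e /gN (KL hI3 hS3 selx_add); last first.
  by move=> q /mapP [i _ ->]; apply: B_T3; apply/pbP; apply: valP.
rewrite big_map; apply: eq_bigr => i _; rewrite GRing.valZ /selx /=.
by rewrite pbT //; apply/pbP; apply: valP.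
Qed.

Lemma main_nf : normal_form (@free_lmod R) x f.
Proof.
exists MT, NT, VT, WT; split.
  split; apply: spanT_free.
  - exact: Indep_sub hI3 A_T3.
  - exact: Indep_sub hI3 B_T3.
  - by apply: Indep_sub hI3 _ => e [].
  - by apply: Indep_sub hID _ => q [].
exists phi, psi; split; first by split; [exact: phi_lin|exact: phi_bij|exact: psi_lin|exact: psi_bij].
exists (idxT B), (@bT _ _ B), gg; split.
- exact: spanT_basis (Indep_sub hI3 B_T3).
- exact: gg_rmul.
- move=> p; rewrite /psi /phi /=; congr (_, _, _).
  + by rewrite E5A.
  + apply: val_inj; rewrite /gg !insubdK ?gN_sp ?qB_sp ?pB_sp //; exact: E5B.
  + by apply: val_inj; rewrite insubdK ?qC_sp // E5C GRing.val0.
Qed.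
End Main. End Ring.

Theorem mainTheorem5 (R : nzRingType) (m : R -> Prop) (x : R) :
  local_with_max m ->
  (exists a, m a /\ a <> 0) ->
  (forall a b, m a -> m b -> a * b = 0) ->
  (forall y, m y -> y <> 0 ->
     forall a, (m a <-> exists r, a = r * y) /\ (m a <-> exists r, a = y * r)) ->
  m x -> x <> 0 ->
  (forall (P Q : lmodType R) (f : {linear P -> Q}),
      free_lmod P -> free_lmod Q -> normal_form (@free_lmod R) x f) /\
  (forall (P Q : lmodType R) (f : {linear P -> Q}),
      fgfree_lmod P -> fgfree_lmod Q -> normal_form (@fgfree_lmod R) x f).
Proof.
move=> Hloc _ Hm2 Hgen Hmx Hx0; split.
  by move=> P Q f hP hQ; exact: (main_nf Hloc Hm2 Hgen Hmx Hx0 f hP hQ).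
move=> P Q f [hP fgP] [hQ fgQ].
have [M [N [V [W [[fM fN fV fW] [phi [psi [[lphi bphi lpsi bpsi] rest]]]]]]]] :=
  main_nf Hloc Hm2 Hgen Hmx Hx0 f hP hQ.
exists M, N, V, W; split; last by exists phi, psi.
have [gi _ gi2] := bphi; have [hi _ hi2] := bpsi.
split; split => //.
- apply: (@fingen_surj _ _ _ (fun p => (phi p).1.1)) fgP.
    by move=> a u v; rewrite lphi.
  by move=> v; exists (gi (v, 0, 0)); rewrite gi2.
- apply: (@fingen_surj _ _ _ (fun p => (phi p).1.2)) fgP.
    by move=> a u v; rewrite lphi.
  by move=> v; exists (gi (0, v, 0)); rewrite gi2.
- apply: (@fingen_surj _ _ _ (fun p => (phi p).2)) fgP.
    by move=> a u v; rewrite lphi.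
  by move=> v; exists (gi (0, 0, v)); rewrite gi2.
- apply: (@fingen_surj _ _ _ (fun q => (psi q).2)) fgQ.
    by move=> a u v; rewrite lpsi.
  by move=> v; exists (hi (0, 0, v)); rewrite hi2.
Qed.
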